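(* There exist $c>0$ and $\tilde y>0$ such that for every $y>\tilde y$, $$\Big|\int_{-\infty}^{\infty}\big|\varphi_x(iy)-iy\big|^2\,dx-\min\Big\{1,\frac{\pi}{4y}\Big\}\Big|<\frac{c}{y^3}.$$
   Context: For $x\in\mathbb{R}$ and $z$ in the upper half plane $\mathbb{H}=\{z\in\mathbb{C}:\operatorname{Im} z>0\}$, $\varphi_x(z)=x+\sqrt{(z-x)^2-1}$, using the branch of the square root with positive imaginary part. *)

(* Defs.v *)
From Stdlib Require Import Reals ClassicalEpsilon.
From Coquelicot Require Import Coquelicot.
Open Scope R_scope.

(* The branch of the square root with positive imaginary part:
   a w with w^2 = a and Im w > 0 (unique whenever a is not in [0,+oo),
   which is always the case for the arguments used below). *)
Definition psqrt (a : C) : C :=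
  epsilon (inhabits (RtoC 0)) (fun w : C => (w * w)%C = a /\ 0 < Im w).

Definition varphi (x : R) (z : C) : C :=
  (RtoC x + psqrt ((z - RtoC x) * (z - RtoC x) - RtoC 1))%C.

Definition iy (y : R) : C := (0, y).

(* Main.v *)
Require Import Defs.
From Stdlib Require Import Reals Lra Psatz ClassicalEpsilon Classical.
From Coquelicot Require Import Coquelicot.
Open Scope R_scope.

Definition Df (y x : R) := sqrt ((x^2+y^2-1)^2 + 4*y^2).
Definition df (y x : R) := (Df y x - (x^2+y^2-1))/2.
Definition qf (y x : R) := sqrt (y^2 + df y x).
Definition Gf (y x : R) := (x - x*y/qf y x)^2 + (qf y x - y)^2.

Lemma D_facts y x : 0 < y ->
  0 <= Df y x /\ (Df y x)^2 = (x^2+y^2-1)^2 + 4*y^2 /\ x^2+y^2-1 < Df y x.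
Proof.
  intros Hy. unfold Df.
  assert (H0 : 0 <= (x^2+y^2-1)^2 + 4*y^2) by (pose proof (pow2_ge_0 (x^2+y^2-1)); pose proof (pow2_ge_0 y); lra).
  split; [apply sqrt_pos|]. split; [rewrite pow2_sqrt; lra|].
  destruct (Rle_or_lt (x^2+y^2-1) 0) as [Hn|Hp].
  - assert (0 < sqrt ((x^2+y^2-1)^2 + 4*y^2)) by (apply sqrt_lt_R0; pose proof (pow2_ge_0 (x^2+y^2-1)); nra). lra.
  - rewrite <- (sqrt_pow2 (x^2+y^2-1)) at 1 by lra.
    apply sqrt_lt_1_alt. split; nra.
Qed.

Lemma d_facts y x : 0 < y ->
  0 < df y x /\ (df y x)^2 + df y x * (x^2+y^2-1) = y^2.
Proof.
  intros Hy. destruct (D_facts y x Hy) as [H1 [H2 H3]]. unfold df.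
  split; [lra|]. nra.
Qed.

Lemma q_facts y x : 0 < y ->
  0 < qf y x /\ (qf y x)^2 = y^2 + df y x.
Proof.
  intros Hy. destruct (d_facts y x Hy) as [H1 H2]. unfold qf.
  split; [apply sqrt_lt_R0; nra| rewrite pow2_sqrt; nra].
Qed.

Lemma psqrt_spec (u v p q : R) : 0 < q -> p*p - q*q = u -> 2*p*q = v ->
  psqrt (u, v) = (p, q).
Proof.
  intros Hq Hu Hv. unfold psqrt.
  set (P := fun w : C => (w * w)%C = (u, v) /\ 0 < Im w).
  assert (Hex : exists w, P w).
  { exists (p, q). split; [|simpl; lra].
    unfold Cmult; simpl. f_equal; lra. }
  destruct (epsilon_spec (inhabits (RtoC 0)) P Hex) as [Hw Him].
  destruct (epsilon (inhabits (RtoC 0)) P) as [a b].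
  unfold Cmult in Hw; simpl in Hw, Him.
  assert (E1 : a*a - b*b = u) by (apply (f_equal fst) in Hw; simpl in Hw; lra).
  assert (E2 : a*b + b*a = v) by (apply (f_equal snd) in Hw; simpl in Hw; lra).
  assert (Id : ((a-p)^2+(b-q)^2)*((a+p)^2+(b+q)^2) =
     ((a*a-b*b) - (p*p-q*q))^2 + ((a*b+b*a) - 2*p*q)^2) by ring.
  assert (Z : ((a-p)^2+(b-q)^2)*((a+p)^2+(b+q)^2) = 0) by (rewrite Id; nra).
  assert (Pos : 0 < (a+p)^2+(b+q)^2) by (pose proof (pow2_ge_0 (a+p)); assert (0 < b+q) by lra; nra).
  assert (Z2 : (a-p)^2+(b-q)^2 = 0).
  { apply Rmult_integral in Z. destruct Z; [auto|lra]. }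
  pose proof (pow2_ge_0 (a-p)); pose proof (pow2_ge_0 (b-q)).
  f_equal; nra.
Qed.

Lemma G_eq y x : 0 < y ->
  (Cmod (varphi x (iy y) - iy y)%C) ^ 2 = Gf y x.
Proof.
  intros Hy. destruct (q_facts y x Hy) as [Hq HQ].
  destruct (d_facts y x Hy) as [Hd Hd2].
  set (q := qf y x) in *. set (d := df y x) in *.
  unfold varphi, iy.
  assert (Harg : (((0,y) - RtoC x) * ((0,y) - RtoC x) - RtoC 1)%C =
     (x^2 - y^2 - 1, -2*x*y)).
  { unfold Cminus, Cmult, Cplus, Copp, RtoC; simpl. f_equal; ring. }
  rewrite Harg.
  rewrite (psqrt_spec _ _ (-(x*y)/q) q Hq).
  2:{ field_simplify; [|lra].
      assert (q^4 = (y^2+d)^2) by (rewrite <- HQ; ring).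
      rewrite H. apply Rmult_eq_reg_r with (q^2); [|nra].
      field_simplify; [|lra]. rewrite HQ. nra. }
  2:{ field. lra. }
  unfold Cmod. rewrite pow2_sqrt by (apply Rplus_le_le_0_compat; apply pow2_ge_0).
  unfold Cminus, Cplus, Copp, RtoC; simpl.
  unfold Gf. fold q. field. lra.
Qed.
Lemma G_cont y x : 0 < y -> continuous (Gf y) x.
Proof.
  intros Hy. apply (@ex_derive_continuous R_AbsRing R_NormedModule).
  destruct (q_facts y x Hy) as [Hq HQ].
  destruct (d_facts y x Hy) as [Hd Hd2].
  assert (P1 : 0 < (x^2+y^2-1)^2 + 4*y^2) by (pose proof (pow2_ge_0 (x^2+y^2-1)); nra).
  assert (P2 : 0 < y^2 + df y x) by nra.
  assert (P3 : qf y x <> 0) by lra.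
  unfold Gf, qf, df, Df. unfold qf, df, Df in P2, P3.
  auto_derive. repeat split; first [exact P1 | exact P2 | exact P3].
Qed.
Lemma G_form y x : 0 < y ->
  Gf y x = (df y x)^2 * (x^2+y^2+df y x) / ((y^2 + df y x) * (qf y x + y)^2).
Proof.
  intros Hy. destruct (q_facts y x Hy) as [Hq HQ].
  destruct (d_facts y x Hy) as [Hd Hd2].
  unfold Gf. set (q := qf y x) in *. set (d := df y x) in *.
  assert (qy : q - y = d/(q+y)).
  { apply Rmult_eq_reg_r with (q+y); [|lra]. field_simplify; [|lra]. nra. }
  replace (x - x*y/q) with (x*(q-y)/q) by (field; lra).
  rewrite qy. rewrite <- HQ.
  replace (x^2+y^2+d) with (x^2+q^2) by (rewrite HQ; ring).
  field. lra.
Qed.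

Lemma core_bound (y r d q : R) : 2 <= y -> y^2 <= r -> 0 < d ->
  d^2 + d*(r-1) = y^2 -> 0 < q -> q^2 = y^2 + d ->
  Rabs (d^2*(r+d)/((y^2+d)*(q+y)^2) - /4 * /r) <= /y^2 * /r.
Proof.
  intros Hy Hr Hd Hd2 Hq HQ.
  assert (Hy2 : 4 <= y^2) by nra.
  assert (Hd43 : d < 4/3).
  { destruct (Rlt_or_le d (4/3)) as [h|h]; [exact h|].
    exfalso. assert (d*(r-1) >= 4/3*(r-1)) by nra. nra. }
  set (P := d*r).
  assert (HP : P = y^2 + d - d^2) by (unfold P; nra).
  assert (HP1 : y^2 - 4/9 <= P) by (rewrite HP; nra).
  assert (HP2 : P <= y^2 + 1/4) by (rewrite HP; pose proof (pow2_ge_0 (d-1/2)); nra).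
  assert (Hqy : y <= q) by nra.
  set (E := (y^2+d)*(q+y)^2).
  assert (HE1 : 4*y^4 <= E).
  { unfold E. assert (4*y^2 <= (q+y)^2) by nra. 
    replace (4*y^4) with (y^2*(4*y^2)) by ring.
    apply Rmult_le_compat; nra. }
  assert (HE2 : E <= (y^2+d)*(4*y^2+2*d)).
  { unfold E. apply Rmult_le_compat_l; [nra|]. pose proof (pow2_ge_0 (q-y)). nra. }
  set (Nn := 4*r*d^2*(r+d)).
  assert (HN : Nn = 4*P^2 + 4*P*d^2) by (unfold Nn, P; ring).
  assert (U : Nn - E <= 10*y^2).
  { rewrite HN. assert (P^2 <= (y^2+1/4)^2) by nra.
    assert (P*d^2 <= (y^2+1/4)*(16/9)) by (apply Rmult_le_compat; nra).
    nra. }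
  assert (L : E - Nn <= 13*y^2).
  { rewrite HN. assert ((y^2-4/9)^2 <= P^2) by nra.
    assert ((y^2+d)*(4*y^2+2*d) <= (y^2+4/3)*(4*y^2+8/3)) by (apply Rmult_le_compat; nra).
    assert (0 <= P*d^2) by (apply Rmult_le_pos; nra).
    nra. }
  assert (Hr0 : 0 < r) by nra.
  assert (HE0 : 0 < E) by nra.
  replace (d^2*(r+d)/E - /4 * /r) with ((Nn - E)/(4*r*E))
    by (unfold Nn; field; split; lra).
  unfold Rdiv. rewrite Rabs_mult. rewrite (Rabs_pos_eq (/ (4*r*E))) by
   (apply Rlt_le, Rinv_0_lt_compat; nra).
  assert (Rabs (Nn - E) <= 13*y^2) by (apply Rabs_le; split; lra).
  apply Rle_trans with (13*y^2 * / (4*r*E)).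
  { apply Rmult_le_compat_r; [apply Rlt_le, Rinv_0_lt_compat; nra| lra]. }
  rewrite <- Rinv_mult.
  apply Rle_trans with (13*y^2 * /(4*r*(4*y^4))).
  { apply Rmult_le_compat_l; [nra|]. apply Rinv_le_contravar; nra. }
  replace (13*y^2 * /(4*r*(4*y^4))) with (13/16 * /(y^2*r)) by (field; nra).
  assert (0 < /(y^2*r)) by (apply Rinv_0_lt_compat; nra). lra.
Qed.

Lemma G_bound y x : 2 <= y ->
  Rabs (Gf y x - /4 * /(x^2+y^2)) <= /y^2 * /(x^2+y^2).
Proof.
  intros Hy. assert (Hy0 : 0 < y) by lra.
  destruct (q_facts y x Hy0) as [Hq HQ].
  destruct (d_facts y x Hy0) as [Hd Hd2].
  rewrite G_form by lra.
  replace (x^2+y^2+df y x) with ((x^2+y^2) + df y x) by ring.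
  pose proof (pow2_ge_0 x).
  apply core_bound; auto; try lra; try (rewrite <- Hd2; ring).
Qed.
Lemma atan_lim_p eps : 0 < eps -> exists M, forall x, M < x -> PI/2 - eps < atan x.
Proof.
  intros He. set (e := Rmin eps (PI/2)).
  assert (He0 : 0 < e) by (unfold e; apply Rmin_pos; [lra | pose proof PI_RGT_0; lra]).
  assert (He1 : e <= eps) by apply Rmin_l.
  assert (He2 : e <= PI/2) by apply Rmin_r.
  exists (tan (PI/2 - e)). intros x Hx.
  apply atan_increasing in Hx. rewrite atan_tan in Hx; [lra|].
  pose proof PI_RGT_0. split; lra.
Qed.

Lemma atan_lim_m eps : 0 < eps -> exists M, forall x, x < M -> atan x < - PI/2 + eps.
Proof.
  intros He. destruct (atan_lim_p eps He) as [M HM].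
  exists (-M). intros x Hx. specialize (HM (-x) ltac:(lra)).
  rewrite atan_opp in HM. lra.
Qed.

Lemma F_lim_p y : 0 < y ->
  filterlim (fun x => atan (x/y) / y) (Rbar_locally p_infty) (locally (PI/2/y)).
Proof.
  intros Hy P [eps HP].
  destruct (atan_lim_p (eps*y)) as [M HM]; [pose proof (cond_pos eps); nra|].
  exists (M*y). intros x Hx. apply HP.
  assert (M < x/y) by (apply Rmult_lt_reg_r with y; [lra|]; field_simplify; lra).
  specialize (HM _ H). pose proof (atan_bound (x/y)).
  change (Rabs (atan (x/y)/y - PI/2/y) < eps).
  rewrite Rabs_left1.
  - apply Rmult_lt_reg_r with y; [lra|]. field_simplify; [|lra]. lra.
  - unfold Rdiv. rewrite <- Rmult_minus_distr_r. 
    apply Rmult_le_0_r; [lra| apply Rlt_le, Rinv_0_lt_compat; lra].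
Qed.

Lemma F_lim_m y : 0 < y ->
  filterlim (fun x => atan (x/y) / y) (Rbar_locally m_infty) (locally (-PI/2/y)).
Proof.
  intros Hy P [eps HP].
  destruct (atan_lim_m (eps*y)) as [M HM]; [pose proof (cond_pos eps); nra|].
  exists (M*y). intros x Hx. apply HP.
  assert (x/y < M) by (apply Rmult_lt_reg_r with y; [lra|]; field_simplify; lra).
  specialize (HM _ H). pose proof (atan_bound (x/y)).
  change (Rabs (atan (x/y)/y - -PI/2/y) < eps).
  rewrite Rabs_pos_eq.
  - apply Rmult_lt_reg_r with y; [lra|]. field_simplify; [|lra]. lra.
  - unfold Rdiv. rewrite <- Rmult_minus_distr_r.
    apply Rmult_le_pos; [lra| apply Rlt_le, Rinv_0_lt_compat; lra].
Qed.

Lemma F_deriv y x : 0 < y -> is_derive (fun x => atan (x/y) / y) x (/(x^2+y^2)).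
Proof.
  intros Hy. pose proof (pow2_ge_0 x). auto_derive; [exact I|]. field. split; nra.
Qed.

Lemma inv_cont y x : 0 < y -> continuous (fun x => /(x^2+y^2)) x.
Proof.
  intros Hy. apply (@ex_derive_continuous R_AbsRing R_NormedModule).
  auto_derive. pose proof (pow2_ge_0 x). nra.
Qed.

Lemma int_inv y : 0 < y ->
  is_RInt_gen (fun x => /(x^2+y^2)) (Rbar_locally m_infty) (Rbar_locally p_infty) (PI/y).
Proof.
  intros Hy.
  set (F := fun x => atan (x/y) / y).
  assert (HD : forall x, Derive F x = /(x^2+y^2)).
  { intros x. apply is_derive_unique. apply F_deriv; auto. }
  apply is_RInt_gen_ext with (Derive F).
  { apply Filter_prod with (fun _ => True) (fun _ => True); try apply filter_true.
    intros a b _ _ t _. apply HD. }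
  replace (PI/y) with (PI/2/y - -PI/2/y) by (field; lra).
  apply is_RInt_gen_Derive.
  - apply Filter_prod with (fun _ => True) (fun _ => True); try apply filter_true.
    intros a b _ _ t _. eexists. apply F_deriv; auto.
  - apply Filter_prod with (fun _ => True) (fun _ => True); try apply filter_true.
    intros a b _ _ t _. apply continuous_ext with (fun x => /(x^2+y^2)).
    { intros; symmetry; apply HD. }
    apply inv_cont; auto.
  - apply F_lim_m; auto.
  - apply F_lim_p; auto.
Qed.

Lemma RInt_inv_le y a b : 0 < y -> a <= b ->
  RInt (fun x => /(x^2+y^2)) a b <= PI/y.
Proof.
  intros Hy Hab.
  assert (H : is_RInt (fun x => /(x^2+y^2)) a b (minus (atan (b/y)/y) (atan (a/y)/y))).
  { apply (is_RInt_derive (fun x => atan (x/y) / y)).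
    - intros; apply F_deriv; auto.
    - intros; apply inv_cont; auto. }
  rewrite (is_RInt_unique _ _ _ _ H).
  unfold minus, plus, opp; simpl.
  pose proof (atan_bound (b/y)). pose proof (atan_bound (a/y)).
  apply Rmult_le_reg_r with y; [lra|]. field_simplify; lra.
Qed.
Lemma improper_exists (f : R -> R) (M : R) :
  (forall x, continuous f x) -> (forall x, 0 <= f x) ->
  (forall a b, a <= b -> RInt f a b <= M) ->
  exists I, is_RInt_gen f (Rbar_locally m_infty) (Rbar_locally p_infty) I.
Proof.
  intros Hc Hp HM.
  assert (Hex : forall a b, ex_RInt f a b).
  { intros a b. apply (@ex_RInt_continuous R_CompleteNormedModule). intros; apply Hc. }
  set (S := fun v => exists a b, a <= b /\ v = RInt f a b).
  destruct (completeness S) as [I [Hub Hlub]].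
  { exists M. intros v [a [b [Hab ->]]]. apply HM; auto. }
  { exists (RInt f 0 0). unfold S. exists 0, 0. split; auto; lra. }
  exists I. unfold is_RInt_gen, filterlimi, filter_le, filtermapi.
  intros P [eps HP].
  destruct (classic (exists a0 b0, a0 <= b0 /\ I - eps < RInt f a0 b0)) as [[a0 [b0 [Hab Hv]]]|Hn].
  2:{ exfalso. assert (I <= I - eps).
      { apply Hlub. intros v [a [b [Hab ->]]].
        destruct (Rle_or_lt (RInt f a b) (I - eps)) as [h|h]; auto.
        exfalso; apply Hn; exists a, b; auto. }
      pose proof (cond_pos eps). lra. }
  apply Filter_prod with (fun a => a < a0) (fun b => b0 < b).
  + exists a0. auto.
  + exists b0. auto.
  + intros a b Ha Hb. exists (RInt f a b). split.
    { simpl. apply (@RInt_correct R_CompleteNormedModule). apply Hex. }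
    apply HP.
    change (Rabs (RInt f a b - I) < eps).
    assert (Hle : RInt f a b <= I) by (apply Hub; exists a, b; split; [lra|auto]).
    assert (Hsplit : RInt f a b = RInt f a a0 + RInt f a0 b0 + RInt f b0 b).
    { rewrite <- (RInt_Chasles f a b0 b) by auto.
      rewrite <- (RInt_Chasles f a a0 b0) by auto. reflexivity. }
    assert (0 <= RInt f a a0) by (apply RInt_ge_0; auto; lra).
    assert (0 <= RInt f b0 b) by (apply RInt_ge_0; auto; lra).
    rewrite Rabs_left1 by lra. lra.
Qed.

Theorem lemmaA1 :
  exists c : R, 0 < c /\ exists yt : R, 0 < yt /\
    forall y : R, yt < y ->
      exists I : R,
        is_RInt_gen (fun x : R => (Cmod (varphi x (iy y) - iy y)%C) ^ 2)
          (Rbar_locally m_infty) (Rbar_locally p_infty) I /\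
        Rabs (I - Rmin 1 (PI / (4 * y))) < c / y ^ 3.
Proof.
  exists 5. split; [lra|]. exists 2. split; [lra|]. intros y Hy.
  assert (Hy0 : 0 < y) by lra.
  assert (Gb : forall x, Gf y x <= /(x^2+y^2)).
  { intros x. pose proof (G_bound y x ltac:(lra)) as Hb.
    apply Rabs_le_between in Hb. destruct Hb as [_ Hb].
    assert (0 < /(x^2+y^2)) by (apply Rinv_0_lt_compat; pose proof (pow2_ge_0 x); nra).
    assert (/y^2 <= /4) by (apply Rinv_le_contravar; nra).
    assert (/y^2 * /(x^2+y^2) <= /4 * /(x^2+y^2)) by (apply Rmult_le_compat_r; lra).
    lra. }
  assert (Gp : forall x, 0 <= Gf y x).
  { intros x. unfold Gf. pose proof (pow2_ge_0 (x - x * y / qf y x)).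
    pose proof (pow2_ge_0 (qf y x - y)). lra. }
  destruct (improper_exists (Gf y) (PI/y)) as [I HI].
  { intros x. apply G_cont; auto. }
  { exact Gp. }
  { intros a b Hab. apply Rle_trans with (RInt (fun x => /(x^2+y^2)) a b).
    - apply RInt_le; auto.
      + apply (@ex_RInt_continuous R_CompleteNormedModule). intros; apply G_cont; auto.
      + apply (@ex_RInt_continuous R_CompleteNormedModule). intros; apply inv_cont; auto.
    - apply RInt_inv_le; auto. }
  exists I. split.
  { apply is_RInt_gen_ext with (Gf y); [|exact HI].
    apply Filter_prod with (fun _ => True) (fun _ => True); try apply filter_true.
    intros a b _ _ t _. symmetry. apply G_eq; auto. }
  pose proof (is_RInt_gen_scal _ (/4) _ (int_inv y Hy0)) as H4.
  pose proof (is_RInt_gen_minus _ _ _ _ HI H4) as Hd.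
  pose proof (is_RInt_gen_scal _ (/y^2) _ (int_inv y Hy0)) as Hb.
  assert (H1 : filter_prod (Rbar_locally m_infty) (Rbar_locally p_infty) (fun ab : R * R => fst ab <= snd ab)).
  { apply Filter_prod with (fun a => a < 0) (fun b => 0 < b).
    + exists 0; auto.
    + exists 0; auto.
    + simpl; intros; lra. }
  assert (H2 : filter_prod (Rbar_locally m_infty) (Rbar_locally p_infty)
     (fun ab : R * R => forall x : R, fst ab <= x <= snd ab ->
        norm (minus (Gf y x) (scal (/ 4) (/ (x ^ 2 + y ^ 2)))) <= scal (/ y ^ 2) (/ (x ^ 2 + y ^ 2)))).
  { apply Filter_prod with (fun _ => True) (fun _ => True); try apply filter_true.
    intros a b _ _ t _. apply G_bound; lra. }
  pose proof (@RInt_gen_norm R_CompleteNormedModule _ _ _ _ _ _ _ _ H1 H2 Hd Hb) as Hn.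
  change (Rabs (I - /4 * (PI/y)) <= /y^2 * (PI/y)) in Hn.
  assert (HPI := PI_4).
  assert (HPI0 := PI_RGT_0).
  rewrite Rmin_right.
  2:{ apply Rmult_le_reg_r with (4*y); [lra|]. field_simplify; lra. }
  replace (PI/(4*y)) with (/4 * (PI/y)) by (field; lra).
  apply Rle_lt_trans with (/y^2 * (PI/y)); auto.
  replace (/y^2 * (PI/y)) with (PI/y^3) by (field; lra).
  apply Rmult_lt_compat_r; [apply Rinv_0_lt_compat; nra| lra].
Qed.
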